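(* Let $G$ be a strongly connected digraph with at least two vertices. Then for every arc $(v,w)$ of $G$ there exists an arc $(a,b)$ of $G$ that is a good arc for $(v,w)$.
   Context: Digraphs may have loops but no multiple arcs; paths are directed, without repeated vertices, and a path from a vertex to itself may have length $0$. For a set or element $X$ of arcs, $G\setminus X$ is the digraph obtained by removing $X$. Given arcs $(a,b)$ and $(v,w)$ of $G$, $(a,b)$ is a good arc for $(v,w)$ if: (i) $b\neq w$; (ii) for every vertex $u\neq w$, $G\setminus(a,b)$ has a path from $u$ to $v$; (iii) for every vertex $u$, either $G\setminus(a,b)$ has a path from $w$ to $u$, or $G$ has a path from $w$ to $u$ that contains the arc $(a,b)$ and such that every vertex of its subpath from $b$ to $u$ has in-degree one in $G$. *)

(* Defs.v *)
(* A digraph is a finite vertex type T with an arc relation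
   e : rel T (loops allowed, no multiple arcs: (x,y) is an arc iff e x y). *)
From mathcomp Require Import all_boot.
Set Implicit Arguments.
Unset Strict Implicit.
Unset Printing Implicit Defensive.

Section Digraphs.
Variable T : finType.

Definition del_arc (e : rel T) (a b : T) : rel T :=
  fun x y => e x y && ((x, y) != (a, b)).

(* Length 0 (p = [::]) is allowed, giving a path from x to x. *)
Definition is_dpath (e : rel T) (x y : T) (p : seq T) : bool :=
  [&& path e x p, uniq (x :: p) & last x p == y].

Definition has_dpath (e : rel T) (x y : T) : Prop :=
  exists p, is_dpath e x y p.

Definition strongly_connected (e : rel T) : Prop :=
  forall x y : T, has_dpath e x y.

(* in-degree of y in G (a loop at y counts as an in-arc). *)
Definition indeg (e : rel T) (y : T) : nat := #|[set x | e x y]|.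

Definition good_arc (e : rel T) (a b v w : T) : Prop :=
  [/\ b != w,
      (forall u, u != w -> has_dpath (del_arc e a b) u v) &
      (forall u, has_dpath (del_arc e a b) w u \/
         exists p, is_dpath e w u p /\
           exists p1 p2, w :: p = p1 ++ a :: b :: p2 /\
             all (fun z => indeg e z == 1) (b :: p2))].
End Digraphs.

(* Main.v *)
Require Import Defs.
From mathcomp Require Import all_boot.

Set Implicit Arguments.
Unset Strict Implicit.
Unset Printing Implicit Defensive.

Section Aux.
Variable T : finType.
Implicit Types (e R D : rel T) (U : {set T}).

Lemma dpathE R x y : has_dpath R x y <-> connect R x y.
Proof.
split.
  case=> p /and3P[pp _ /eqP <-]; apply/connectP; by exists p.
move/connectP=> [p pp ->]; case: (shortenP pp) => p' pp' up' _.
by exists p'; rewrite /is_dpath pp' up' eqxx.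
Qed.

Lemma connect_mono R D x y : (forall x y, R x y -> D x y) ->
  connect R x y -> connect D x y.
Proof. by move=> H; apply: connect_sub => x' y' /H; apply: connect1. Qed.

Lemma path_last_connect R c p t : path R c p -> t \in c :: p ->
  connect R t (last c p).
Proof.
elim: p c t => [|d p IH] c t /=; first by rewrite inE => _ /eqP ->.
case/andP=> Hcd Hp; rewrite inE => /orP[/eqP->|Ht].
  apply: connect_trans (connect1 Hcd) _; exact: IH Hp (mem_head _ _).
exact: IH Hp Ht.
Qed.

Lemma pathD e c p x y : path e c p -> y \notin p -> path (del_arc e x y) c p.
Proof.
elim: p c => [|d p IH] c //= /andP[Hcd Hp]; rewrite inE negb_or => /andP[Hyd Hy].
rewrite IH // andbT /del_arc Hcd /=; apply/eqP => [[_ E]].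
by rewrite E eqxx in Hyd.
Qed.

Definition eU e U : rel T := fun x y => [&& x \in U, y \in U & e x y].

Lemma path_eU_all e U c p : path (eU e U) c p -> all (mem U) p.
Proof.
elim: p c => [|d p IH] c //= /andP[/and3P[_ Hd _] Hp].
by rewrite Hd (IH d).
Qed.

Lemma path_to_eU e U c p : path e c p -> all (mem U) (c :: p) ->
  path (eU e U) c p.
Proof.
elim: p c => [|d p IH] c //= /andP[Hcd Hp] /and3P[Hc Hd Hall].
by rewrite /eU Hc Hd Hcd /= IH //= Hd.
Qed.

Lemma leave_set e U c p : path e c p -> c \in U -> last c p \notin U ->
  exists a b, [/\ a \in U, b \notin U & e a b].
Proof.
elim: p c => [|d p IH] c /=; first by move=> _ ->.
case/andP=> Hcd Hp Hc Hl; case: (boolP (d \in U)) => Hd.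
  exact: IH Hp Hd Hl.
by exists c, d.
Qed.

Lemma return_set e U c p : path e c p -> uniq (c :: p) -> c \notin U ->
  last c p \in U ->
  exists S pe, [/\ path e c (rcons S pe), uniq (c :: S), pe \in U,
     all (fun x => x \notin U) (c :: S) & {subset c :: S <= c :: p}].
Proof.
elim: p c => [|d p IH] c /=; first by move=> _ _ H1 H2; rewrite H2 in H1.
case/andP=> Hcd Hp /andP[Hcn Hu] Hc Hl; case: (boolP (d \in U)) => Hd.
  exists [::], d; split => //=; first by rewrite Hcd.
    by rewrite Hc.
  by move=> z; rewrite !inE => ->.
have [S [pe [H1 H2 H3 H4 H5]]] := IH d Hp Hu Hd Hl.
exists (d :: S), pe; split => //=.
- by rewrite Hcd.
- move: H2 => /= /andP[-> ->]; rewrite !andbT.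
  by apply/negP => /H5 Hin; rewrite Hin in Hcn.
- by rewrite Hc.
- move=> z; rewrite inE => /orP[/eqP->|/H5 Hz]; first exact: mem_head.
  by rewrite inE Hz orbT.
Qed.


Definition SCin e U := forall x y, x \in U -> y \in U -> connect (eU e U) x y.

Lemma ear_reach e D U p0 S pe w :
  (forall c d, eU e U c d -> D c d) -> SCin e U -> p0 \in U -> pe \in U ->
  w \in U -> path D p0 (rcons S pe) ->
  forall t, (t \in U) || (t \in S) -> connect D w t && connect D t w.
Proof.
move=> HU HS Hp0 Hpe Hw Hp t /orP[Ht|Ht].
  by rewrite !(connect_mono HU) ?HS.
have tin : t \in p0 :: rcons S pe by rewrite inE mem_rcons inE Ht !orbT.
apply/andP; split.
  apply: connect_trans (connect_mono HU (HS _ _ Hw Hp0)) _.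
  exact: (path_connect Hp).
apply: connect_trans (connect_mono HU (HS _ _ Hpe Hw)).
by have := path_last_connect Hp tin; rewrite last_rcons.
Qed.

Lemma ear_SCin e U w p0 S pe : SCin e U -> w \in U -> p0 \in U -> pe \in U ->
  path e p0 (rcons S pe) -> SCin e (U :|: [set x in S]).
Proof.
move=> HS Hw Hp0 Hpe Hp; set U' := U :|: _.
have sub : forall c d, eU e U c d -> eU e U' c d.
  by move=> c d /and3P[Hc Hd Hcd]; rewrite /eU !inE Hc Hd Hcd.
have Hp' : path (eU e U') p0 (rcons S pe).
  apply: path_to_eU => //; apply/allP => t.
  by rewrite inE mem_rcons !inE => /or3P[/eqP->|/eqP->|->]; rewrite ?Hp0 ?Hpe ?orbT.
move=> x y; rewrite !inE => Hx Hy.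
have /andP[_ H1] := ear_reach sub HS Hp0 Hpe Hw Hp' Hx.
have /andP[H2 _] := ear_reach sub HS Hp0 Hpe Hw Hp' Hy.
exact: connect_trans H1 H2.
Qed.

Lemma ear_indeg e U w p0 S pe :
  SCin e U -> w \in U -> p0 \in U -> pe \in U -> path e p0 (rcons S pe) ->
  uniq S -> all (fun x => x \notin U) S -> (forall t, (t \in U) || (t \in S)) ->
  (forall x y, e x y -> y != w -> ~ (forall u u', connect (del_arc e x y) u u')) ->
  forall y, y \in S -> indeg e y = 1.
Proof.
move=> HS Hw Hp0 Hpe Hp Hu Hall Hcov NR y Hy.
move: Hp Hu Hall Hcov; case/splitPr: Hy => S1 S2 Hp Hu Hall Hcov.
have yU : y \notin U by move: Hall; rewrite all_cat /= => /and3P[_ ->].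
move: (Hp); rewrite rcons_cat /= cat_path /= => /and3P[HS1 Hzy Hrest].
set z := last p0 S1 in Hzy.
rewrite /indeg (_ : [set x | e x y] = [set z]) ?cards1 //.
apply/setP => x; rewrite !inE; apply/idP/idP; last by move/eqP->.
move=> Hxy; case: (eqVneq x z) => // Hxz; exfalso.
have yw : y != w by apply/eqP => E; rewrite E Hw in yU.
apply: (NR x y Hxy yw) => u u'.
move: Hu; rewrite cat_uniq /= => /and3P[_ /norP[Hy1 _] /andP[Hy2 _]].
have HD : path (del_arc e x y) p0 (rcons (S1 ++ y :: S2) pe).
  rewrite rcons_cat /= cat_path /=; apply/and3P; split.
  - exact: pathD HS1 Hy1.
  - rewrite /del_arc Hzy /=; apply/eqP => -[E]; by move: Hxz; rewrite -E /z eqxx.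
  - apply: pathD Hrest _; rewrite mem_rcons inE negb_or Hy2 andbT.
    by apply/eqP => E; rewrite E Hpe in yU.
have HU : forall c d, eU e U c d -> del_arc e x y c d.
  move=> c d /and3P[_ Hd Hcd]; rewrite /del_arc Hcd /=.
  by apply/eqP => [[_ E]]; rewrite -E Hd in yU.
have /andP[_ H1] := ear_reach HU HS Hp0 Hpe Hw HD (Hcov u).
have /andP[H2 _] := ear_reach HU HS Hp0 Hpe Hw HD (Hcov u').
exact: connect_trans H1 H2.
Qed.

Lemma ear_exists e U w v : (forall x y, connect e x y) -> e v w -> w \in U ->
  U != setT -> (v \in U) || (U == [set w]) ->
  exists p0 b S pe, [/\ p0 \in U, pe \in U & e p0 b] /\
    [/\ path e b (rcons S pe), uniq (b :: S), all (fun x => x \notin U) (b :: S)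
      & (v \in U) \/ (U = [set w] /\ v = last b S)].
Proof.
move=> SC Hvw Hw HU Hv.
case: (boolP (v \in U)) => HvU.
  have [x Hx] : exists x, x \notin U.
    case: (boolP [exists x, x \notin U]) => [/existsP//|/existsPn H].
    have E : U = setT by apply/setP => t; rewrite inE; move: (H t); rewrite negbK.
    by move: HU; rewrite E eqxx.
  have /connectP[p Hp Hxl] := SC w x.
  have Hxl' : last w p \notin U by rewrite -Hxl.
  have [a [b [Ha Hb Hab]]] := leave_set Hp Hw Hxl'.
  have /dpathE[q /and3P[Hq Uq /eqP Hql]] := SC b w.
  have Hql' : last b q \in U by rewrite Hql.
  have [S [pe [H1 H2 H3 H4 _]]] := return_set Hq Uq Hb Hql'.
  by exists a, b, S, pe; split; [split|split; [| | |left]].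
rewrite (negbTE HvU) /= in Hv; move/eqP: Hv => HUw.
have /dpathE[[|b S] /and3P[Hp Up /eqP Hl]] := SC w v.
  by rewrite /= in Hl; rewrite -Hl Hw in HvU.
exists w, b, S, w; split; first by split => //; case/andP: Hp.
case/andP: Hp => _ Hp; split.
- by rewrite rcons_path; apply/andP; split; [exact: Hp | rewrite /= in Hl; rewrite Hl].
- by case/andP: Up.
- apply/allP => t Ht; rewrite HUw inE; apply/eqP => E.
  by move: Up; rewrite /= -E Ht.
- by right.
Qed.

End Aux.

Theorem lemma1 (T : finType) (e : rel T) :
  1 < #|T| -> strongly_connected e ->
  forall v w : T, e v w -> exists a b : T, e a b /\ good_arc e a b v w.
Proof.
move=> Hn SC0 v w Hvw.
have SC : forall x y, connect e x y by move=> x y; apply/dpathE/SC0.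
case: (boolP [exists x, exists y, [&& e x y, y != w &
          [forall u, forall u', connect (del_arc e x y) u u']]]).
  case/existsP=> x /existsP[y /and3P[Hxy Hyw /forallP H]].
  exists x, y; split => //; split => //.
    by move=> u _; apply/dpathE; exact: (forallP (H u)) v.
  by move=> u; left; apply/dpathE; exact: (forallP (H w)) u.
move=> /existsPn NR'.
have NR : forall x y, e x y -> y != w ->
    ~ (forall u u', connect (del_arc e x y) u u').
  move=> x y Hxy Hyw H; move: (NR' x) => /existsPn/(_ y).
  rewrite Hxy Hyw /= => /negP; apply; apply/forallP => u; apply/forallP => u'.
  exact: H.
pose Fb := fun U : {set T} => [&& w \in U, U != setT,
   [forall x in U, forall y in U, connect (eU e U) x y] &
   (v \in U) || (U == [set w])].
have F0 : Fb [set w].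
  rewrite /Fb inE eqxx /= eqxx orbT andbT; apply/andP; split.
    apply/eqP => E; move: Hn; by rewrite -cardsT -E cards1.
  apply/forallP => x; apply/implyP; rewrite inE => /eqP->.
  apply/forallP => y; apply/implyP; rewrite inE => /eqP->; exact: connect0.
case: (@arg_maxnP _ [set w] Fb (fun U : {set T} => #|U|) F0) => U /and4P[HwU HUT HSCb HvU] Hmax.
have HSC : SCin e U.
  move=> x y Hx Hy; move/forallP: HSCb => /(_ x)/implyP/(_ Hx).
  by move/forallP => /(_ y)/implyP/(_ Hy).
have [p0 [b [S [pe [[Hp0 Hpe Hp0b] [HpS HuS HallS Hvcase]]]]]] :=
  ear_exists SC Hvw HwU HUT HvU.
have Hpath : path e p0 (rcons (b :: S) pe) by rewrite /= Hp0b HpS.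
have bU : b \notin U by case/andP: HallS.
have Hcov : forall t, (t \in U) || (t \in b :: S).
  set U' := U :|: [set x in b :: S].
  have : U' == setT.
    apply/negPn/negP => HU'T.
    have FU' : Fb U'.
      have HSC' := ear_SCin HSC HwU Hp0 Hpe Hpath.
      rewrite /Fb !inE HwU HU'T /=; apply/andP; split.
        apply/forallP => x; apply/implyP => Hx.
        apply/forallP => y; apply/implyP => Hy; exact: HSC'.
      case: Hvcase => [->//|[_ ->]]; have := mem_last b S; rewrite inE => ->; by rewrite orbT.
    have H := Hmax U' FU'; move: H; rewrite /geq /= leqNgt => /negP; apply; apply: proper_card.
    apply/properP; split.
      by apply/subsetP => t Ht; rewrite inE Ht.
    by exists b; [rewrite !inE eqxx orbT | ].
  move/eqP => E t; have : t \in U' by rewrite E inE.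
  by rewrite !inE.
have Hindeg := ear_indeg HSC HwU Hp0 Hpe Hpath HuS HallS Hcov NR.
have HUD : forall c d, eU e U c d -> (del_arc e p0 b) c d.
  move=> c d /and3P[_ Hd Hcd]; rewrite /del_arc Hcd /=.
  by apply/eqP => -[_ E]; move: bU; rewrite -E Hd.
have HpD : path (del_arc e p0 b) b (rcons S pe).
  apply: pathD HpS _; rewrite mem_rcons inE negb_or; apply/andP; split.
    by apply/eqP => E; move: bU; rewrite E Hpe.
  by case/andP: HuS.
have memS : forall t, t \in b :: S -> t \in b :: rcons S pe.
  by move=> t; rewrite !inE mem_rcons inE => /orP[->|->]; rewrite ?orbT.
exists p0, b; split => //; split.
- by apply/eqP => E; move: bU; rewrite E HwU.
- move=> u Huw; apply/dpathE.
  case: Hvcase => [HvU'|[HUw Hv]].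
    case/orP: (Hcov u) => Hu.
      exact: connect_mono HUD (HSC u v Hu HvU').
    apply: connect_trans (connect_mono HUD (HSC pe v Hpe HvU')).
    by have := path_last_connect HpD (memS _ Hu); rewrite last_rcons.
  have Hu : u \in b :: S.
    by move: (Hcov u); rewrite HUw inE (negbTE Huw).
  have HpD' : path (del_arc e p0 b) b S by move: HpD; rewrite rcons_path => /andP[].
  by rewrite Hv; exact: path_last_connect HpD' Hu.
- move=> u; case/orP: (Hcov u) => Hu.
    by left; apply/dpathE; exact: connect_mono HUD (HSC w u HwU Hu).
  right.
  have /dpathE[q0 /and3P[Hq0 Uq0 /eqP Hq0l]] := HSC w p0 HwU Hp0.
  have q0U := path_eU_all Hq0.
  have [S1 [S2 E]] : exists S1 S2, b :: S = S1 ++ u :: S2.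
    by case/splitPr: Hu => S1 S2; exists S1, S2.
  have [p2' Ep2] : exists p2', rcons S1 u = b :: p2'.
    case: S1 E => [|c S1'] [Eb _]; [exists [::] | exists (rcons S1' u)];
      by rewrite Eb.
  rewrite E in Hpath HuS HallS Hindeg.
  exists (q0 ++ rcons S1 u); split.
    rewrite /is_dpath; apply/and3P; split.
    - rewrite cat_path Hq0l; apply/andP; split.
        by apply: (sub_path _ Hq0) => c d /and3P[_ _ ->].
      move: Hpath; rewrite rcons_cat cat_path /= => /and3P[H1 H2 _].
      by rewrite rcons_path H1 H2.
    - rewrite -cat_cons cat_uniq Uq0 /=.
      move: HuS; rewrite cat_uniq /= => /and3P[HS1 /norP[Hu1 _] _].
      rewrite rcons_uniq Hu1 HS1 !andbT; apply/hasPn => y Hy.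
      have : y \notin U.
        apply: (allP HallS); rewrite mem_cat inE.
        by move: Hy; rewrite mem_rcons inE => /orP[->|->]; rewrite ?orbT.
      apply: contra; rewrite inE => /orP[/eqP->//|Hq]; exact: (allP q0U).
    - by rewrite last_cat Hq0l last_rcons.
  exists (belast w q0), p2'; split.
    by rewrite -Ep2 -cat_cons (lastI w q0) Hq0l cat_rcons.
  rewrite -Ep2; apply/allP => y Hy; apply/eqP; apply: Hindeg.
  by rewrite mem_cat inE; move: Hy; rewrite mem_rcons inE => /orP[->|->]; rewrite ?orbT.
Qed.
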